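(* Let $Y$ be the Springer fibre, i.e. the variety of full flags $F_1\subset F_2\subset\dots\subset F_n=V$ ($\dim F_i=i$) with $NF_i\subset F_{i-1}$ for all $i$ (where $F_0=\{0\}$). (a) Let $I\subset\{1,\dots,n-1\}$, write $\{1,\dots,n\}\setminus I=\{j_1<\dots<j_r\}$ (so $j_r=n$), and let $U\subset Y$ be a subspace of type $I$. Then $N F_{j_l}\subset F_{j_{l-1}}$ for all $l=1,\dots,r$ (with $F_{j_0}:=\{0\}$) and every flag $(F_1\subset\dots\subset F_n)\in U$. (b) If $U\subset Y$ is a subspace of type $I$, then $I$ contains no two consecutive integers.
   Context: Fix integers $n\ge 2k\ge 0$. Let $V$ be an $n$-dimensional complex vector space with ordered basis $e_1,\dots,e_{n-k},f_1,\dots,f_k$ and $N:V\to V$ the nilpotent endomorphism with $Ne_i=e_{i-1}$, $Nf_i=f_{i-1}$, $e_0=f_0=0$ (Jordan type $(n-k,k)$). For $I\subset\{1,\dots,n-1\}$, a subspace of type $I$ is a set of full flags in $V$ of the form $\{(F_1\subset\dots\subset F_n): \dim F_i=i,\ F_j=G_j \text{ for all } j\in\{1,\dots,n\}\setminus I\}$ for some fixed subspaces $G_j$ (i.e. the $F_j$ with $j\notin I$ are fixed and those with $j\in I$ range over all possibilities). *)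

(* Defs.v *)
From HB Require Import structures.
From mathcomp Require Import all_boot all_order all_algebra.
Set Implicit Arguments. Unset Strict Implicit. Unset Printing Implicit Defensive.
Import GRing.Theory Num.Theory.
Local Open Scope ring_scope.

(* V = 'rV[C]_n, coordinates 0..n-1 correspond to the ordered basis
   e_1,...,e_{n-k}, f_1,...,f_k  (e_i ~ index i-1, f_i ~ index n-k+i-1).
   Vectors are rows, N acts by v |-> v *m Nmx. *)
Definition Nmx (C : fieldType) (n k : nat) : 'M[C]_n :=
  \matrix_(p < n, q < n) ((((q : nat).+1 == p) && ((p : nat) != (n - k)%N)) %:R : C).

Definition Nend (C : fieldType) (n k : nat) : 'End('rV[C]_n) :=
  linfun (fun v : 'rV[C]_n => v *m Nmx C n k).

Definition is_flag (C : fieldType) (n : nat) (F : nat -> {vspace 'rV[C]_n}) : Prop :=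
  (forall i, (i <= n)%N -> \dim (F i) = i) /\
  (forall i, (i < n)%N -> (F i <= F i.+1)%VS).

Definition springer (C : fieldType) (n k : nat) (F : nat -> {vspace 'rV[C]_n}) : Prop :=
  is_flag F /\ (forall i, (1 <= i <= n)%N -> (Nend C n k @: F i <= F i.-1)%VS).

Definition subspace_of_type (C : fieldType) (n : nat) (I : pred nat)
    (U : (nat -> {vspace 'rV[C]_n}) -> Prop) : Prop :=
  exists G : nat -> {vspace 'rV[C]_n},
    (forall F, U F <-> (is_flag F /\
        forall j, (1 <= j <= n)%N -> ~~ I j -> F j = G j)) /\
    (exists F, U F).

(* j_1 < ... < j_r : the elements of {1..n} \ I, in increasing order;
   jseq = [:: 0; j_1; ...; j_r] so that nth 0 jseq l = j_l with j_0 := 0. *)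
Definition jseq (n : nat) (I : pred nat) : seq nat :=
  0%N :: [seq j <- iota 1 n | ~~ I j].

Arguments springer C n k F : clear implicits.
Arguments subspace_of_type C n I U : clear implicits.
Arguments is_flag C n F : clear implicits.

(* Main.v *)
Require Import Defs.
From HB Require Import structures.
From mathcomp Require Import all_boot all_order all_algebra.
From mathcomp Require Import zify.
Set Implicit Arguments. Unset Strict Implicit. Unset Printing Implicit Defensive.
Import GRing.Theory Num.Theory.
Local Open Scope ring_scope.

Lemma flag_step (C : fieldType) n (F : nat -> {vspace 'rV[C]_n}) m :
  is_flag C n F -> (m.+2 <= n)%N ->
  exists W : {vspace 'rV[C]_n},
    is_flag C n (fun j => if j == m.+1 then W else F j) /\ (F m.+1 :&: W = F m)%VS.
Proof.
case=> Hd Hs Hm.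
have: ~~ (F m.+2 <= F m.+1)%VS.
  by apply/negP => /dimvS; rewrite !Hd //; lia.
case/subvPn => y Hy Hny.
have HFm : (F m <= F m.+1)%VS by apply: Hs; lia.
have HFm1 : (F m.+1 <= F m.+2)%VS by apply: Hs; lia.
have Hnym : y \notin F m by apply: contra Hny => /(subvP HFm).
set W := (F m + <[y]>)%VS.
have HW1 : (F m <= W)%VS := addvSl _ _.
have HyW : y \in W := subvP (addvSr _ _) _ (memv_line y).
have HW2 : (W <= F m.+2)%VS by rewrite subv_add (subv_trans HFm HFm1) -memvE Hy.
have dW : \dim W = m.+1.
  apply/eqP; rewrite eqn_leq; apply/andP; split.
    apply: leq_trans (leq_of_leqif (dimv_add_leqif _ _)) _.
    rewrite Hd ?dim_vline; last lia.
    by case: (y != 0); rewrite ?addn1 ?addn0.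
  rewrite -(Hd m) ?(ltn_leqif (dimv_leqif_eq HW1)); last lia.
  by apply/negP => /eqP HE; move: Hnym; rewrite HE HyW.
exists W; split; last first.
  have HS : (F m.+1 + W <= F m.+2)%VS by rewrite subv_add HFm1 HW2.
  have HS1 : (\dim (F m.+1 + W) <= m.+2)%N by rewrite -(Hd m.+2) // dimvS.
  have HS2 : (\dim (F m.+1) < \dim (F m.+1 + W))%N.
    rewrite (ltn_leqif (dimv_leqif_eq (addvSl _ _))).
    apply/negP => /eqP HE; move: Hny; rewrite HE.
    by rewrite (subvP (addvSr _ _) _ HyW).
  rewrite Hd in HS2; last lia.
  have := dimv_sum_cap (F m.+1) W; rewrite dW Hd; last lia.
  move=> Hsum.
  apply/eqP; rewrite eq_sym eqEdim subv_cap HFm HW1 /= Hd; last lia.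
  lia.
split.
  by move=> j Hj; case: ifP => [/eqP -> | _]; [exact: dW | exact: Hd].
move=> i Hi; case: (eqVneq i m.+1) => [->|Hne]; first by rewrite /= ifN; [exact: HW2 | lia].
case: (eqVneq i.+1 m.+1) => [[->]|Hne1]; first exact: HW1.
by apply: Hs.
Qed.

Lemma chain (C : fieldType) n k (I : pred nat) (U : (nat -> {vspace 'rV[C]_n}) -> Prop)
  (HUY : forall F, U F -> springer C n k F) (HU : subspace_of_type C n I U) a b :
  (1 <= b <= n)%N -> (a < b)%N -> (forall i, (a < i < b)%N -> I i) ->
  forall d, (d < b - a)%N -> forall F, U F -> (Nend C n k @: F b <= F (b - 1 - d)%N)%VS.
Proof.
move=> Hb Hab HI'; case: HU => G [HG _].
elim=> [|d IH] Hd F UF.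
  by rewrite subn0 subn1; exact: (HUY F UF).2 b Hb.
have Hm1 : (b - 1 - d = (b - 2 - d).+1)%N by lia.
have Hm0 : (b - 1 - d.+1 = b - 2 - d)%N by lia.
rewrite Hm0; set m := (b - 2 - d)%N.
have [HF HFG] := (HG F).1 UF.
have Hmn : (m.+2 <= n)%N by rewrite /m; lia.
have [W [HW HcW]] := flag_step HF Hmn.
set F' := (fun j => if j == m.+1 then W else F j).
have UF' : U F'.
  apply/HG; split => // j Hj HIj; rewrite /F'.
  case: ifP => [/eqP Ej|_]; last exact: HFG.
  exfalso; move: HIj; rewrite Ej HI' //; apply/andP; split; rewrite /m; lia.
have h1 := IH (ltnW Hd) F UF; rewrite Hm1 in h1.
have h2 := IH (ltnW Hd) F' UF'; rewrite Hm1 /F' /= eqxx ifN in h2; last by rewrite /m; lia.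
by rewrite -HcW subv_cap h1 h2.
Qed.

Lemma jseq_sorted n I : sorted ltn (jseq n I).
Proof.
rewrite /jseq /= path_sortedE; last exact: ltn_trans.
apply/andP; split.
  by apply/allP => x; rewrite mem_filter mem_iota => /andP[_ /andP[]].
by apply: sorted_filter; [exact: ltn_trans | exact: iota_ltn_sorted].
Qed.

Lemma jseq_mem n I x : x \in jseq n I -> x != 0%N -> (1 <= x <= n)%N && ~~ I x.
Proof.
rewrite inE => /orP[/eqP -> //|]; rewrite mem_filter mem_iota => /andP[-> H] _.
by rewrite andbT; lia.
Qed.

Lemma jseq_gap n I l : (1 <= l < size (jseq n I))%N ->
  let a := nth 0%N (jseq n I) l.-1 in let b := nth 0%N (jseq n I) l in
  [/\ (a < b)%N, (1 <= b <= n)%N & forall i, (a < i < b)%N -> I i].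
Proof.
move=> /andP[Hl Hls] a b.
have So := jseq_sorted n I.
have Hab : (a < b)%N.
  apply: (sorted_ltn_nth ltn_trans 0%N So); rewrite ?inE; lia.
have Hb : (1 <= b <= n)%N.
  have := jseq_mem (mem_nth 0%N Hls); rewrite -/b => H.
  have Hb0 : b != 0%N by lia.
  by have /andP[] := H Hb0.
split => // i Hi; apply/negPn/negP => HIi.
have Him : i \in jseq n I by rewrite inE mem_filter HIi mem_iota; apply/orP; right; lia.
set p := index i (jseq n I).
have Hp : (p < size (jseq n I))%N by rewrite index_mem.
have Hpi : nth 0%N (jseq n I) p = i by rewrite nth_index.
case: (ltngtP p l.-1) => Hpl.
- have := sorted_ltn_nth ltn_trans 0%N So; move/(_ p l.-1).
  rewrite !inE Hpi -/a => /(_ Hp) H; have := H (_ : (l.-1 < size (jseq n I))%N) Hpl; lia.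
- case: (ltngtP p l) => Hpl2; first lia.
  + have := sorted_ltn_nth ltn_trans 0%N So; move/(_ l p).
    rewrite !inE Hpi -/b => H; have := H Hls Hp Hpl2; lia.
  + move: Hpi; rewrite Hpl2 -/b; lia.
- move: Hpi; rewrite Hpl -/a; lia.
Qed.

Lemma ker_dim (C : fieldType) n k : (2 * k <= n)%N -> (\dim (lker (Nend C n k)) <= 2)%N.
Proof.
move=> hk.
pose e (j : nat) : 'rV[C]_n := \row_(q < n) (((q : nat) == j)%:R : C).
pose coef (v : 'rV[C]_n) (j : nat) := \sum_(q < n) v 0 q * (((q : nat) == j)%:R : C).
have coefE v (p : 'I_n) : coef v p = v 0 p.
  rewrite /coef (bigD1 p) //= eqxx mulr1 big1 ?addr0 // => q Hq.
  by have /negbTE := Hq; rewrite -val_eqE /= => ->; rewrite mulr0.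
have sub : (lker (Nend C n k) <= <[e 0%N]> + <[e (n - k)%N]>)%VS.
  apply/subvP => v; rewrite memv_ker /Nend => /eqP Hv0.
  have Hv : v *m Nmx C n k = 0 by rewrite -Hv0; symmetry; exact: (lfunE (mulmxr (Nmx C n k)) v).
  have Hz (p : 'I_n) : (p : nat) != 0%N -> (p : nat) != (n - k)%N -> v 0 p = 0.
    move=> Hp0 Hpk.
    have Hq : (p.-1 < n)%N by case: p Hp0 Hpk => /= p' Hp'; lia.
    have := congr1 (fun M : 'rV[C]_n => M 0 (Ordinal Hq)) Hv.
    rewrite /= !mxE (bigD1 p) //= !mxE /= (prednK (_ : 0 < p)%N); last by lia.
    rewrite eqxx Hpk mulr1 big1 ?addr0 // => q Hq'.
    rewrite !mxE /= (prednK (_ : 0 < p)%N); last by lia.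
    by have /negbTE := Hq'; rewrite -val_eqE /= eq_sym => ->; rewrite mulr0.
  have -> : v = coef v 0%N *: e 0%N + coef v (n - k)%N *: e (n - k)%N.
    apply/rowP => q; rewrite !mxE.
    have Hn : (0 < n - k)%N by case: q => /= q' Hq'; lia.
    case: (eqVneq (q : nat) 0%N) => [Hq0|Hq0].
      rewrite (_ : coef v 0%N = coef v q); last by rewrite Hq0.
      rewrite coefE Hq0 /= mulr1 (_ : (0 == n - k)%N = false) ?mulr0 ?addr0 //; lia.
    case: (eqVneq (q : nat) (n - k)%N) => [Hqk|Hqk].
      rewrite (_ : coef v (n - k)%N = coef v q); last by rewrite Hqk.
      by rewrite coefE mulr1 mulr0 add0r.
    by rewrite mulr0 mulr0 addr0 Hz.
  by apply: memv_add; apply: memvZ; apply: memv_line.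
apply: leq_trans (dimvS sub) _.
apply: leq_trans (leq_of_leqif (dimv_add_leqif _ _)) _.
by rewrite !dim_vline; case: (_ != 0); case: (_ != 0).
Qed.

Unset Implicit Arguments.

Theorem lemma3p7 (C : numClosedFieldType) (n k : nat) (hk : (2 * k <= n)%N)
    (I : pred nat) (HI : forall i, I i -> (1 <= i <= n.-1)%N)
    (U : (nat -> {vspace 'rV[C]_n}) -> Prop)
    (HUY : forall F, U F -> springer C n k F)
    (HU : subspace_of_type C n I U) :
  (forall F, U F -> forall l, (1 <= l < size (jseq n I))%N ->
      (Nend C n k @: F (nth 0%N (jseq n I) l) <= F (nth 0%N (jseq n I) l.-1))%VS)
  /\ ~ (exists i, I i /\ I i.+1).
Proof.
have PA : forall F, U F -> forall l, (1 <= l < size (jseq n I))%N ->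
      (Nend C n k @: F (nth 0%N (jseq n I) l) <= F (nth 0%N (jseq n I) l.-1))%VS.
  move=> F UF l Hl.
  have [Hab Hb Hgap] := jseq_gap Hl.
  have Hd : (nth 0%N (jseq n I) l - 1 - nth 0%N (jseq n I) l.-1 <
             nth 0%N (jseq n I) l - nth 0%N (jseq n I) l.-1)%N by lia.
  have := chain HUY HU Hb Hab Hgap Hd UF.
  by rewrite (_ : (_ - 1 - (_ - 1 - _))%N = nth 0%N (jseq n I) l.-1) //; lia.
split => //.
case=> i [Hi Hi1].
have [G [_ [F UF]]] := HU.
have := HI i Hi; have := HI i.+1 Hi1 => H1 H2.
set s := jseq n I.
have Hn : n \in s.
  rewrite inE mem_filter mem_iota; apply/orP; right.
  apply/andP; split; last lia.
  by apply/negP => /HI; lia.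
set l := find (fun x => i < x)%N s.
have Hhas : has (fun x => i < x)%N s by apply/hasP; exists n => //; lia.
have Hls : (l < size s)%N by rewrite -has_find.
have Hnb := nth_find 0%N Hhas; rewrite -/l in Hnb.
have Hl0 : (0 < l)%N.
  by move: Hnb; case: (l) => //=.
have Hna : (i < nth 0%N s l.-1)%N = false.
  by apply: before_find; rewrite -/l; lia.
set a := nth 0%N s l.-1 in Hna.
set b := nth 0%N s l in Hnb.
have Hbm : b \in s by apply: mem_nth.
have Hb0 : b != 0%N by lia.
have /andP[Hb1 HIb] := jseq_mem Hbm Hb0.
have Hbi1 : b != i.+1 by apply: contraNneq HIb => ->.
have Ham : a \in s by apply: mem_nth; exact: leq_ltn_trans (leq_pred l) Hls.
have Hai : (a < i)%N.
  case: (eqVneq a 0%N) => [->|Ha0]; first lia.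
  have /andP[_ HIa] := jseq_mem Ham Ha0.
  have Hai1 : a != i by apply: contraNneq HIa => ->.
  lia.
have Hl : (1 <= l < size s)%N by lia.
have HN := PA F UF l Hl.
rewrite -/s -/a -/b in HN.
have [[Hd _] _] := HUY F UF.
have Hk := limg_ker_dim (Nend C n k) (F b).
have Hk1 : (\dim (Nend C n k @: F b) <= a)%N.
  by rewrite -(Hd a) ?dimvS //; lia.
have Hk2 : (\dim (F b :&: lker (Nend C n k)) <= 2)%N.
  by apply: leq_trans (dimvS (capvSr _ _)) (@ker_dim C n k hk).
rewrite Hd in Hk; last lia.
have Hib : (i < b)%N by exact: Hnb.
move: Hk Hk1 Hk2; set x := \dim (F b :&: _); set y := \dim (_ @: _) => Hk Hk1 Hk2. clearbody a b. lia.
Qed.
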